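(* Let $g_n$ ($n\ge0$) denote the parity of the number of digits equal to $1$ in the negabinary representation of $n$, and for $k\ge0$ let $G_k$ be the finite word $g_0g_1\cdots g_{2^k-1}$ of the first $2^k$ terms. Then $G_0=0$, and: for every even $k\ge0$, $G_{k+1}=G_kF_k$ (concatenation), where $F_k$ is obtained from $G_k$ by replacing every letter $x$ by $1-x$; for every odd $k\ge1$, $G_{k+1}=G_kH_k$, where $H_k$ is obtained from $G_k$ by replacing each of its last $\frac{2}{3}(2^{k-1}-1)$ letters $x$ by $1-x$ and leaving the other letters unchanged.
   Context: Every nonnegative integer $n$ has a unique representation $n=\sum_{i\ge0} d_i(-2)^i$ with digits $d_i\in\{0,1\}$, only finitely many nonzero; this is the negabinary representation. Parity means the number modulo $2$, so $g_n\in\{0,1\}$. *)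

(* Defs.v *)
From mathcomp Require Import all_boot all_order all_algebra.
Set Implicit Arguments. Unset Strict Implicit. Unset Printing Implicit Defensive.
Import Order.TTheory GRing.Theory Num.Theory.

(* Negabinary (base -2) digits, least significant first.
   For z = d + (-2) * m with d = z mod 2 in {0,1}, the next value is
   m = (d - z) / 2 (exact division).  [fuel] bounds the recursion. *)
Fixpoint nb_digits_fuel (fuel : nat) (z : int) : seq bool :=
  match fuel with
  | 0 => [::]
  | f.+1 =>
      if z == 0 then [::]
      else let d := odd `|z|%N in
           d :: nb_digits_fuel f (((d%:Z - z) %/ 2)%Z)
  end.

Definition nbval (s : seq bool) : int :=
  \sum_(i < size s) (nth false s i)%:Z * (- 2%:Z) ^+ i.

(* Digits of the negabinary representation of n (the fuel 2n+2 is more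
   than enough: |z| strictly decreases while |z| >= 2). *)
Definition negabinary (n : nat) : seq bool := nb_digits_fuel (2 * n + 2) n%:Z.

Definition g (n : nat) : nat := odd (count id (negabinary n)).

Definition G (k : nat) : seq nat := [seq g i | i <- iota 0 (2 ^ k)].

Definition F (k : nat) : seq nat := [seq 1 - x | x <- G k].

Definition Hlen (k : nat) : nat := (2 * (2 ^ k.-1 - 1)) %/ 3.
Definition H (k : nat) : seq nat :=
  take (2 ^ k - Hlen k) (G k) ++ [seq 1 - x | x <- drop (2 ^ k - Hlen k) (G k)].

(* Main.v *)
Require Import Defs.
From mathcomp Require Import all_boot all_order all_algebra.
From mathcomp Require Import zify ring.
Import Order.TTheory GRing.Theory Num.Theory.
Local Open Scope ring_scope.

Definition B (z : int) : nat := (2 * `|z|%N + (z < 0)%R)%N.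

Lemma nb0 f : nb_digits_fuel f 0 = [::].
Proof. by case: f. Qed.

Lemma Bstep (z : int) : z != 0 ->
  ((B (((odd `|z|%N)%:Z - z) %/ 2)%Z).+1 <= B z)%N.
Proof.
move=> nz; rewrite /B.
have E := divz_eq z 2.
have h1 : (odd `|z|%N)%:Z = (z %% 2)%Z by lia.
rewrite h1.
have -> : ((z %% 2)%Z - z) = (- (z %/ 2)%Z) * 2 by rewrite {2}E; ring.
rewrite mulzK //.
lia.
Qed.

Lemma fuel_ok f f' z : (B z <= f)%N -> (B z <= f')%N ->
  nb_digits_fuel f z = nb_digits_fuel f' z.
Proof.
elim: f f' z => [|f IH] f' z.
  rewrite leqn0 => /eqP Bz _.
  have -> : z = 0 by move: Bz; rewrite /B; lia.
  by rewrite !nb0.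
case: (eqVneq z 0) => [-> _ _|nz]; first by rewrite !nb0.
move=> h1 h2.
have hs := @Bstep z nz.
case: f' h2 => [|f'] h2; first by lia.
rewrite /= (negbTE nz); congr (_ :: _); apply: IH; lia.
Qed.

Definition p (z : int) : bool := odd (count id (nb_digits_fuel (B z) z)).

Lemma p0 : p 0 = false.
Proof. by rewrite /p nb0. Qed.

Lemma prec (q : int) (d : bool) : p (q * 2 + d%:Z) = d (+) p (- q).
Proof.
case: (eqVneq (q * 2 + d%:Z) 0) => [z0|nz].
  have [hq hd] : q = 0 /\ d = false by move: z0; case: d; lia.
  by rewrite z0 hq hd p0 ?oppr0 ?p0.
have hs := @Bstep _ nz.
have hd : odd (absz (q * 2 + d%:Z)) = d by case: d hs {nz}; lia.
have hq : (((odd (absz (q * 2 + d%:Z)))%:Z - (q * 2 + d%:Z)) %/ 2)%Z = - q.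
  rewrite hd. have -> : d%:Z - (q * 2 + d%:Z) = (-q) * 2 by ring.
  by rewrite mulzK.
move: hs; rewrite /p; case: (B (q * 2 + d%:Z)) => [|f] hs; first by lia.
rewrite /= (negbTE nz).
rewrite hq hd in hs *.
rewrite (@fuel_ok f (B (-q)) (-q)) //.
by case: d {hq hd nz hs} => /=; rewrite ?add1n ?add0n.
Qed.

Fixpoint lohi (k : nat) : int * int :=
  match k with
  | 0 => (0, 0)
  | k'.+1 => let lh := lohi k' in (- (2 * lh.2), 1 - 2 * lh.1)
  end.
Definition lo k := (lohi k).1.
Definition hi k := (lohi k).2.

Lemma loS k : lo k.+1 = - (2 * hi k). Proof. by []. Qed.
Lemma hiS k : hi k.+1 = 1 - 2 * lo k. Proof. by []. Qed.

Lemma lemA k : forall z w, lo k <= z <= hi k -> p (z + (-2) ^+ k * w) = p z (+) p w.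
Proof.
elim: k => [|k IH] z w.
  rewrite /lo /hi /= => hz.
  have -> : z = 0 by lia.
  by rewrite add0r expr0 mul1r p0.
rewrite loS hiS => hz.
have E := divz_eq z 2.
have E2 : z = (z %/ 2)%Z * 2 + (odd `|z|%N)%:Z by lia.
move: (z %/ 2)%Z (odd _) E2 hz => q d -> hz.
have -> : q * 2 + d%:Z + (-2) ^+ k.+1 * w = (q - (-2) ^+ k * w) * 2 + d%:Z.
  rewrite exprS; ring.
rewrite !prec.
have -> : - (q - (-2) ^+ k * w) = - q + (-2) ^+ k * w by ring.
rewrite IH ?addbA //.
case: d hz => hz; lia.
Qed.

Lemma lohiE k :
  3 * hi k = (if odd k then 2 ^+ k.+1 else 2 ^+ k) - 1 /\
  3 * lo k = - ((if odd k then 2 ^+ k else 2 ^+ k.+1) - 2).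
Proof.
elim: k => [|k [IH1 IH2]]; first by rewrite /hi /lo /=; split.
rewrite loS hiS /=.
case: (odd k) IH1 IH2 => /= IH1 IH2; rewrite !exprS; rewrite exprS in IH1 IH2; split; lia.
Qed.

Lemma p1 : p 1 = true.
Proof. by have := prec 0 true; rewrite mul0r add0r oppr0 p0. Qed.
Lemma pm1 : p (-1) = false.
Proof. by have := prec (-1) true; rewrite (_ : -1 * 2 + true%:Z = -1) // opprK p1. Qed.
Lemma p2 : p 2 = false.
Proof. by have := prec 1 false; rewrite (_ : 1 * 2 + false%:Z = 2) // pm1. Qed.
Lemma pm2 : p (-2) = true.
Proof. by have := prec (-1) false; rewrite (_ : -1 * 2 + false%:Z = -2) // opprK p1. Qed.

Lemma pow2Z k : (2 ^ k)%N%:Z = 2 ^+ k.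
Proof. by rewrite -natz natrX. Qed.

Lemma gE n : g n = p n%:Z.
Proof.
rewrite /g /negabinary /p (@fuel_ok (2 * n + 2) (B n%:Z) n%:Z) //; rewrite /B; lia.
Qed.

Lemma flip_even k i : ~~ odd k -> (i < 2 ^ k)%N -> p (2 ^ k + i)%N%:Z = ~~ p i%:Z.
Proof.
move=> ek ik.
have [h1 h2] := lohiE k; rewrite (negbTE ek) exprS in h1 h2.
have eP : (-2) ^+ k = 2 ^+ k :> int.
  by rewrite exprNn -signr_odd (negbTE ek) expr0 mul1r.
have ik' : i%:Z < 2 ^+ k by rewrite -pow2Z; lia.
rewrite PoszD pow2Z.
case: (lerP (3 * i%:Z) (2 ^+ k - 1)) => hi3.
  have := @lemA k i%:Z 1; rewrite eP mulr1 p1 addrC addbT => -> //; lia.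
have hb : lo k <= i%:Z - 2 ^+ k <= hi k by lia.
have := @lemA k (i%:Z - 2 ^+ k) 1 hb; rewrite eP mulr1 p1 addbT.
have -> : i%:Z - 2 ^+ k + 2 ^+ k = i%:Z by ring.
move=> ->.
have := @lemA k (i%:Z - 2 ^+ k) 2 hb; rewrite eP p2 addbF.
have -> : i%:Z - 2 ^+ k + 2 ^+ k * 2 = 2 ^+ k + i%:Z by ring.
move=> ->.
by rewrite negbK.
Qed.

Lemma flip_odd k i : odd k -> (i < 2 ^ k)%N ->
  p (2 ^ k + i)%N%:Z = if (i < 2 ^ k - Hlen k)%N then p i%:Z else ~~ p i%:Z.
Proof.
move=> ok ik.
have [h1 h2] := lohiE k; rewrite ok in h1 h2.
have eP : (-2) ^+ k = - 2 ^+ k :> int.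
  by rewrite exprNn -signr_odd ok expr1 mulN1r.
have ik' : i%:Z < 2 ^+ k by rewrite -pow2Z; lia.
have k0 : (0 < k)%N by move: ok; case: (k).
have em : (2 ^ k = 2 * 2 ^ k.-1)%N by rewrite -expnS prednK.
have em' : 2 ^+ k = 2 * (2 ^ k.-1)%N%:Z :> int by rewrite -pow2Z em PoszM.
rewrite exprS in h1.
rewrite PoszD pow2Z /Hlen.
case: (lerP (3 * i%:Z) (2 * 2 ^+ k - 1)) => hi3.
  rewrite ifT; last by lia.
  have := @lemA k i%:Z (-1); rewrite eP pm1 addbF.
  have -> : i%:Z + - 2 ^+ k * -1 = 2 ^+ k + i%:Z by ring.
  move=> -> //; lia.
rewrite ifF; last by lia.
have hb : lo k <= i%:Z - 2 ^+ k <= hi k by lia.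
have := @lemA k (i%:Z - 2 ^+ k) (-1) hb; rewrite eP pm1 addbF.
have -> : i%:Z - 2 ^+ k + - 2 ^+ k * -1 = i%:Z by ring.
move=> ->.
have := @lemA k (i%:Z - 2 ^+ k) (-2) hb; rewrite eP pm2 addbT.
have -> : i%:Z - 2 ^+ k + - 2 ^+ k * -2 = 2 ^+ k + i%:Z by ring.
by move=> ->.
Qed.

Local Close Scope ring_scope.

Lemma Gsplit k : G k.+1 = G k ++ [seq g i | i <- iota (2 ^ k) (2 ^ k)].
Proof. by rewrite /G expnS mul2n -addnn iotaD map_cat add0n. Qed.

Lemma nthG k i : i < 2 ^ k -> nth 0 (G k) i = g i.
Proof. move=> hi; by rewrite /G (nth_map 0) ?size_iota // nth_iota. Qed.

Theorem theorem4 :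
  G 0 = [:: 0] /\
  (forall k : nat, ~~ odd k -> G k.+1 = G k ++ F k) /\
  (forall k : nat, odd k -> G k.+1 = G k ++ H k).
Proof.
split; first by [].
split => k hk; rewrite Gsplit; congr (_ ++ _).
  apply: (@eq_from_nth _ 0); first by rewrite /F /G !size_map !size_iota.
  move=> i; rewrite size_map size_iota => hi.
  rewrite /F (nth_map 0) ?size_iota // nth_iota // (nth_map 0) ?size_map ?size_iota //.
  rewrite nthG // !gE flip_even //; by case: (p _).
have sG : size (G k) = 2 ^ k by rewrite /G size_map size_iota.
have tle : 2 ^ k - Hlen k <= size (G k) by rewrite sG leq_subr.
apply: (@eq_from_nth _ 0).
  rewrite size_map size_iota /H size_cat size_map size_drop size_takel // sG; lia.
move=> i; rewrite size_map size_iota => hi.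
rewrite (nth_map 0) ?size_iota // nth_iota // gE flip_odd //.
rewrite /H nth_cat size_takel //.
case: ifP => ht.
  by rewrite nth_take // nthG // gE.
rewrite (nth_map 0); last by rewrite size_drop sG; move/negbT: ht; rewrite -leqNgt => ht; lia.
rewrite nth_drop subnKC; last by move/negbT: ht; rewrite -leqNgt.
by rewrite nthG // gE; case: (p _).
Qed.
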